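(* Let $G$ be a finite group acting principally on $X$ and $n\ge 2$. Then the sectional category of $\tilde\epsilon_n : M^{G,n}(X)\to X^n$, $(\alpha_1,\ldots,\alpha_n)\mapsto(\alpha_1(1),\ldots,\alpha_n(1))$, equals $\mathsf{TC}^G_{\mathsf{effv},n}(X)$.
   Context: All spaces are Hausdorff, path-connected and locally path-connected; $G$ acts on the right. $PX$ is the path space with compact-open topology. $M^G_n(X)$ is the subspace of $PX\times G\times\cdots\times G\times PX$ ($n$ path factors, $n-1$ group factors) of tuples $(\alpha_1,g_1,\ldots,g_{n-1},\alpha_n)$ with $\alpha_i(0)g_i=\alpha_{i+1}(0)$; $\epsilon_n:M^G_n(X)\to X^n$ sends such a tuple to $(\alpha_1(1),\ldots,\alpha_n(1))$, and $\mathsf{TC}^G_{\mathsf{effv},n}(X)$ is the (non-reduced) sectional category of $\epsilon_n$, i.e. the least number of open sets covering $X^n$ each admitting a continuous local section. $M^{G,n}(X)=\{(\alpha_1,\ldots,\alpha_n)\in(PX)^n:\alpha_i(0)G=\alpha_j(0)G\}$. The action is principal if it is free and $(x,xg)\mapsto g$ is continuous on $\{(x,xg)\}$. *)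

(* Defs.v *)
From HB Require Import structures.
From mathcomp Require Import all_boot all_order all_algebra all_fingroup.
From mathcomp Require Import all_classical all_reals.
From mathcomp Require Import topology function_spaces subtype_topology discrete_topology.
From mathcomp Require Import num_topology normedtype.

Unset Printing Implicit Defensive.

Import Order.TTheory GRing.Theory Num.Theory.
Import numFieldNormedType.Exports.
Local Open Scope classical_set_scope.
Local Open Scope ring_scope.

Notation unit_interval R := (set_type (`[0, 1]%classic : set R)).

Lemma zero_in_unit_interval (R : realType) : (0 : R) \in (`[0, 1]%classic : set R).
Proof. by rewrite inE /= in_itv /= lexx ler01. Qed.

Lemma one_in_unit_interval (R : realType) : (1 : R) \in (`[0, 1]%classic : set R).
Proof. by rewrite inE /= in_itv /= lexx ler01. Qed.

Definition I0 (R : realType) : unit_interval R := exist _ 0 (zero_in_unit_interval R).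
Definition I1 (R : realType) : unit_interval R := exist _ 1 (one_in_unit_interval R).

Section Defs.
Variable R : realType.
Local Notation I := (unit_interval R).

Definition path_in {X : topologicalType} (A : set X) (x y : X) : Prop :=
  exists f : I -> X, continuous f /\ f (I0 R) = x /\ f (I1 R) = y /\ forall t, A (f t).

Definition path_connected_space (X : topologicalType) : Prop :=
  (exists x : X, True) /\ forall x y : X, path_in setT x y.

Definition locally_path_connected (X : topologicalType) : Prop :=
  forall (x : X) (U : set X), nbhs x U ->
    exists V : set X, [/\ open V, V x, V `<=` U &
                         forall y z, V y -> V z -> path_in V y z].

(** The path space PX (compact-open topology): the ambient function space
    [PXa X] with the compact-open topology, PX being the subset of
    continuous maps. *)
Definition PXa (X : topologicalType) := {compact-open, I -> X}.
Definition is_path {X : topologicalType} (a : PXa X) : Prop :=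
  continuous (a : I -> X).

Definition is_right_action {X : topologicalType} {gT : finGroupType}
  (act : X -> gT -> X) : Prop :=
  (forall x, act x 1%g = x) /\ (forall x g h, act (act x g) h = act x (g * h)%g).

Definition continuous_action {X : topologicalType} {gT : finGroupType}
  (act : X -> gT -> X) : Prop :=
  continuous (fun p : X * discrete_topology gT => act p.1 p.2).

Definition principal_action {X : topologicalType} {gT : finGroupType}
  (act : X -> gT -> X) : Prop :=
  (forall x g, act x g = x -> g = 1%g) /\
  exists tau : X * X -> discrete_topology gT,
    (forall x g, tau (x, act x g) = g) /\
    {within [set p : X * X | exists g, p.2 = act p.1 g], continuous tau}.

Definition local_section {E B : topologicalType} (S : set E) (p : E -> B)
  (U : set B) : Prop :=
  exists s : B -> E, {within U, continuous s} /\
                     (forall b, U b -> S (s b) /\ p (s b) = b).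

(** [secat_le S p k] : B can be covered by k open sets admitting local sections;
    the sectional category is the least such k (infinite if none). *)
Definition secat_le {E B : topologicalType} (S : set E) (p : E -> B) (k : nat) : Prop :=
  exists U : 'I_k -> set B,
    (forall i, open (U i) /\ local_section S p (U i)) /\
    (forall b, exists i, U i b).

Definition Xpow (X : topologicalType) (n : nat) := {ptws 'I_n -> X}.

Definition MGn_amb (X : topologicalType) (gT : finGroupType) (n : nat) :=
  ({ptws 'I_n -> PXa X} * {ptws 'I_n.-1 -> discrete_topology gT})%type.

Definition MGn {X : topologicalType} {gT : finGroupType} (act : X -> gT -> X)
  (n : nat) : set (MGn_amb X gT n) :=
  [set p | (forall i, is_path (p.1 i)) /\
           forall (i j : 'I_n) (k : 'I_n.-1), val i = val k -> val j = (val k).+1 ->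
             act (p.1 i (I0 R)) (p.2 k) = p.1 j (I0 R)].

Definition eps_effv {X : topologicalType} {gT : finGroupType} (n : nat)
  (p : MGn_amb X gT n) : Xpow X n := fun i => p.1 i (I1 R).

Definition TC_effv_le {X : topologicalType} {gT : finGroupType}
  (act : X -> gT -> X) (n k : nat) : Prop :=
  secat_le (MGn act n) (@eps_effv X gT n) k.

Definition MGn_orb {X : topologicalType} {gT : finGroupType} (act : X -> gT -> X)
  (n : nat) : set {ptws 'I_n -> PXa X} :=
  [set a | (forall i, is_path (a i)) /\
           forall i j : 'I_n,
             [set act (a i (I0 R)) g | g in [set: gT]] =
             [set act (a j (I0 R)) g | g in [set: gT]]].

Definition eps_tilde {X : topologicalType} (n : nat)
  (a : {ptws 'I_n -> PXa X}) : Xpow X n := fun i => a i (I1 R).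

End Defs.

(* Main.v *)
Require Import Defs.
From HB Require Import structures.
From mathcomp Require Import all_boot all_order all_algebra all_fingroup.
From mathcomp Require Import all_classical all_reals.
From mathcomp Require Import topology function_spaces subtype_topology discrete_topology.
From mathcomp Require Import num_topology normedtype.
Import numFieldNormedType.Exports.
Local Open Scope classical_set_scope.

Lemma within_comp_cont {T U V : topologicalType} {A : set T} {f : T -> U} {g : U -> V} :
  {within A, continuous f} -> continuous g -> {within A, continuous (g \o f)}.
Proof.
move=> cf cg x; exact: (@continuous_comp (subspace A) U V (from_subspace A f) g x (cf x) (cg _)).
Qed.

Lemma within_comp_within {T U V : topologicalType} (A : set T) (B : set U)
  (f : T -> U) (g : U -> V) :
  {within A, continuous f} -> {within B, continuous g} ->
  (forall x, A x -> B (f x)) -> {within A, continuous (g \o f)}.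
Proof.
move=> /subspace_continuousP cf /subspace_continuousP cg fAB.
apply/subspace_continuousP => x Ax W /= Wg.
have := cg _ (fAB _ Ax) W Wg; rewrite /= nbhs_simpl /within /=.
move=> /(cf _ Ax) H.
rewrite /= nbhs_simpl; move: H; rewrite nbhs_simpl.
move=> H1; have H3 : nbhs x (fun y => A y -> B (f y) -> W (g (f y))) := H1. change (nbhs x (fun y => A y -> W (g (f y)))). apply: filterS H3 => y H Ay; exact: H Ay (fAB _ Ay).
Qed.

Lemma within_pair {T U V : topologicalType} (A : set T) (f : T -> U) (g : T -> V) :
  {within A, continuous f} -> {within A, continuous g} ->
  {within A, continuous (fun x => (f x, g x))}.
Proof.
move=> cf cg x; apply: cvg_pair; [exact: cf | exact: cg].
Qed.

Lemma within_ptws {T : topologicalType} (A : set T) {I : Type} {V : topologicalType}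
  (h : T -> {ptws I -> V}) :
  (forall i, {within A, continuous (fun x => h x i)}) -> {within A, continuous h}.
Proof.
move=> ch x; apply/cvg_sup => i.
move: x; apply/(@continuousP _ (initial_topology (fun f : I -> V => f i))).
move=> _ [B oB <-].
have -> : from_subspace A h @^-1` ((fun f : I -> V => f i) @^-1` B) =
  from_subspace A (fun x => h x i) @^-1` B by [].
by move/continuousP: (ch i); apply.
Qed.

Lemma eval_cont {R : realType} {X : topologicalType} (t : unit_interval R) :
  continuous (fun g : PXa R X => g t).
Proof.
apply/continuousP => O oO.
have -> : (fun g : PXa R X => g t) @^-1` O = [set g : PXa R X | g @` [set t] `<=` O].
  apply/seteqP; split => g /=.
    by move=> Ogt _ [s -> <-].
  by apply; exists t.
apply: compact_open_open => //; exact: compact_set1.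
Qed.

Lemma orb_act {X : Type} {gT : finGroupType} (act : X -> gT -> X) :
  (forall x g h, act (act x g) h = act x (g * h)%g) ->
  forall x g, [set act (act x g) h | h in [set: gT]] = [set act x h | h in [set: gT]].
Proof.
move=> actM x g; apply/seteqP; split => _ [h _ <-].
  by exists (g * h)%g => //; rewrite actM.
by exists (g^-1 * h)%g => //; rewrite actM mulKVg.
Qed.

Lemma fst_cont {A B : topologicalType} : continuous (fun p : A * B => p.1).
Proof. by case=> a b; apply: cvg_fst. Qed.

Theorem mainTheorem4 (R : realType) (X : topologicalType) (gT : finGroupType)
  (act : X -> gT -> X) (n : nat) :
  hausdorff_space X ->
  path_connected_space R X ->
  locally_path_connected R X ->
  is_right_action act ->
  continuous_action act ->
  principal_action act ->
  (2 <= n)%N ->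
  forall k : nat,
    secat_le (MGn_orb R act n) (@eps_tilde R X n) k <-> TC_effv_le R act n k.
Proof.
move=> _ _ _ [act1 actM] _ [_ [tau [tauP tauC]]].
case: n => [//|n'] n2 k; split.
- case=> U [HU cov]; exists U; split=> // i.
  have [oU [s [cs sP]]] := HU i; split => //.
  have orbP : forall b, U i b -> forall i1 j1 : 'I_n'.+1,
      exists g, act (s b i1 (I0 R)) g = s b j1 (I0 R).
    move=> b Ub i0 j0; have [[_ orb] _] := sP b Ub.
    have : [set act (s b i0 (I0 R)) g | g in [set: gT]] (s b j0 (I0 R)).
      by rewrite (orb i0 j0); exists 1%g => //; rewrite act1.
    by case=> g _ Hg; exists g.
  exists (fun b => (s b, (fun kk : 'I_n' => tau (s b (inord kk) (I0 R), s b (inord kk.+1) (I0 R)))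
     : {ptws 'I_n'.+1.-1 -> discrete_topology gT})).
  split.
  + apply: within_pair => //; apply: within_ptws => kk.
    apply: (@within_comp_within _ _ _ (U i) [set p : X * X | exists g, p.2 = act p.1 g]
      (fun b => (s b (inord kk) (I0 R), s b (inord kk.+1) (I0 R))) tau).
    * apply: within_pair.
        have h1 := within_comp_cont cs (@proj_continuous 'I_n'.+1 (fun _ => PXa R X) (inord kk)).
        have h2 := within_comp_cont h1 (@eval_cont R X (I0 R)).
        exact: h2.
      exact: (within_comp_cont (within_comp_cont cs (@proj_continuous _ _ (inord kk.+1))) (eval_cont (I0 R))).
    * exact: tauC.
    * move=> b Ub /=; have [g Hg] := orbP b Ub (inord kk) (inord kk.+1).
      by exists g; rewrite Hg.
  + move=> b Ub; have [[paths _] eps] := sP b Ub; split; last exact: eps.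
    split => // i0 j0 kk Hi Hj /=.
    have -> : i0 = inord kk by apply: val_inj; rewrite /= Hi inordK //; exact: leqW (ltn_ord kk).
    have -> : j0 = inord kk.+1 by apply: val_inj; rewrite /= Hj inordK //; exact: (ltn_ord kk).
    have [g Hg] := orbP b Ub (inord kk) (inord kk.+1).
    by rewrite -Hg tauP.
- case=> U [HU cov]; exists U; split=> // i.
  have [oU [s [cs sP]]] := HU i; split => //.
  exists (fun b => (s b).1); split.
    exact: (within_comp_cont cs fst_cont).
  move=> b Ub; have [[paths hyp] eps] := sP b Ub; split; last exact: eps.
  split => // i0 j0.
  have key : forall m (Hm : (m < n'.+1)%N),
      [set act ((s b).1 (Ordinal Hm) (I0 R)) g | g in [set: gT]] =
      [set act ((s b).1 ord0 (I0 R)) g | g in [set: gT]].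
    elim=> [|m IH] Hm; first by congr (fun x => [set act x g | g in [set: gT]]);
      congr ((s b).1 _ (I0 R)); apply: val_inj.
    have Hm' : (m < n'.+1)%N by apply: ltnW.
    have Hk : (m < n')%N by rewrite -ltnS.
    have := hyp (Ordinal Hm') (Ordinal Hm) (Ordinal Hk) erefl erefl.
    by move=> <-; rewrite orb_act // IH.
  have E0 : i0 = Ordinal (ltn_ord i0) by apply: val_inj.
  have E1 : j0 = Ordinal (ltn_ord j0) by apply: val_inj.
  by rewrite E0 E1 !key.
Qed.
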